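(* The sets $$(\mathrm s^{(n,k)},T,\varepsilon)=\{S\in\mathcal M_{\mathcal G,\Gamma}:\mathrm s^{(n,k)}(T,S)<\varepsilon\},\qquad n,k\in\mathbb N,\ \varepsilon>0,\ T\in\mathcal M_{\mathcal G,\Gamma},$$ form a base of the topology on $\mathcal M_{\mathcal G,\Gamma}$ induced by the metric $\mathrm m_{\mathcal G,\Gamma}$, where $\mathrm s^{(n,k)}(T,S)=\sup_{g\in\Gamma\cup(\bigcup_{i\le n}K_i)}\mathrm a_k(T^g,S^g)$.
   Context: $(X,\Sigma,\mu)$ is a separable Lebesgue space with a non-atomic probability measure $\mu$. $\mathcal A$ is the group of invertible measure-preserving transformations of $X$, two transformations being identified if they agree outside a null set. Fix a countable family $\{A_i\}_{i\in\mathbb N}\subset\Sigma$ that generates $\Sigma$ and is dense in $\Sigma$ (for every $A\in\Sigma$ and $\varepsilon>0$ there is $i$ with $\mu(A_i\triangle A)<\varepsilon$). For $T,S\in\mathcal A$ put $\mathrm d(T,S)=\sum_{i}2^{-i}\big(\mu(TA_i\triangle SA_i)+\mu(T^{-1}A_i\triangle S^{-1}A_i)\big)$, $\mathrm a(T,S)=\sum_{i,j}2^{-(i+j)}|\mu(TA_i\cap A_j)-\mu(SA_i\cap A_j)|$, and $\mathrm a_k(T,S)=\sum_{i,j\le k}2^{-(i+j)}|\mu(TA_i\cap A_j)-\mu(SA_i\cap A_j)|$. $\mathcal G$ is a Hausdorff locally compact group with a countable neighborhood base. Fix an at most countable family $\{K_i\}$ of compact subsets of $\mathcal G$ with nonempty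 interiors whose union contains a set generating $\mathcal G$ (if the family has fewer than $n$ members, $\bigcup_{i\le n}K_i$ means the union of all of them). An action of $\mathcal G$ is a family $T=\{T^g\}_{g\in\mathcal G}\subset\mathcal A$ with $T^gT^h=T^{gh}$ for all $g,h$ and such that $g\mapsto\mu(T^gA\cap B)$ is continuous for all $A,B\in\Sigma$. $\mathrm d_{\mathcal G}(T,S)=\sum_i 2^{-i}\sup_{g\in K_i}\mathrm d(T^g,S^g)$. Let $\Gamma\subset\mathcal G$ be an unbounded subset (not contained in any compact set). An action $T$ is $\Gamma$-mixing if for all $A,B\in\Sigma$ and $\varepsilon>0$ there is a compact $C\subset\mathcal G$ with $|\mu(T^gA\cap B)-\mu(A)\mu(B)|<\varepsilon$ for all $g\in\Gamma\setminus C$. $\mathcal M_{\mathcal G,\Gamma}$ is the set of all $\Gamma$-mixing actions with the leash metric $\mathrm m_{\mathcal G,\Gamma}(T,S)=\mathrm d_{\mathcal G}(T,S)+\sup_{g\in\Gamma}\mathrm a(T^g,S^g)$. *)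

(* Defs.v *)
From mathcomp Require Import all_boot all_order all_algebra.
From mathcomp Require Import all_classical all_reals all_analysis.
Set Implicit Arguments. Unset Strict Implicit. Unset Printing Implicit Defensive.
Import Order.TTheory GRing.Theory Num.Theory.
Import numFieldTopology.Exports numFieldNormedType.Exports.
Local Open Scope classical_set_scope.
Local Open Scope ring_scope.

(* Representatives of elements of the group 𝒜 of invertible measure-preserving
   transformations: a forward map and its (a.e.) inverse. *)
Record tr (X : Type) := Tr { tfwd : X -> X ; tbwd : X -> X }.

Definition symdiff {T : Type} (A B : set T) : set T := (A `\` B) `|` (B `\` A).

Section MeasureSide.
Variables (R : realType) (d : measure_display) (X : measurableType d)
  (mu : probability X R).

Definition I01 : set R := [set t : R | 0 <= t <= 1].

(* (X, Σ, μ) is a separable non-atomic Lebesgue probability space: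
   it is isomorphic mod 0 to ([0,1], Lebesgue measure). *)
Definition nonatomic_lebesgue_space : Prop :=
  exists (phiL : X -> R) (psiL : R -> X),
    [/\ measurable_fun setT phiL, measurable_fun I01 psiL,
        ({ae mu, forall x, I01 (phiL x)}),
        ({ae mu, forall x, (psiL (phiL x) = x)}) &
        ({ae (@lebesgue_measure R), forall t, I01 t -> (phiL (psiL t) = t)})]
    /\ (forall B : set R, measurable B ->
          mu (phiL @^-1` B) = lebesgue_measure (B `&` I01)).

Definition is_mpt (T : tr X) : Prop :=
  [/\ measurable_fun setT (tfwd T), measurable_fun setT (tbwd T),
      (forall B, measurable B -> mu (tfwd T @^-1` B) = mu B) &
      (forall B, measurable B -> mu (tbwd T @^-1` B) = mu B)]
  /\ ({ae mu, forall x, (tfwd T (tbwd T x) = x)})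
  /\ ({ae mu, forall x, (tbwd T (tfwd T x) = x)}).

(* image T A (= preimage under T^{-1}) and preimage T^{-1} A *)
Definition timg (T : tr X) (B : set X) : set X := tbwd T @^-1` B.
Definition tpre (T : tr X) (B : set X) : set X := tfwd T @^-1` B.

(* the fixed family {A_i}; ℕ = {1,2,...} is encoded by 0-based indices,
   A_{i+1} := Af i, with weight 2^{-(i+1)} *)
Variable Af : nat -> set X.

Definition wt (i : nat) : R := 2%:R ^- i.+1.

Definition dA (T S : tr X) : \bar R :=
  (\sum_(i <oo) ((wt i)%:E *
     (mu (symdiff (timg T (Af i)) (timg S (Af i)))
      + mu (symdiff (tpre T (Af i)) (tpre S (Af i))))))%E.

Definition aA (T S : tr X) : \bar R :=
  (\sum_(i <oo) \sum_(j <oo) ((wt i * wt j)%:E *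
     `| mu (timg T (Af i) `&` Af j) - mu (timg S (Af i) `&` Af j) |))%E.

(* a_k : indices i, j <= k in ℕ = {1,2,...}, i.e. 0-based i, j < k *)
Definition aAk (k : nat) (T S : tr X) : \bar R :=
  (\sum_(0 <= i < k) \sum_(0 <= j < k) ((wt i * wt j)%:E *
     `| mu (timg T (Af i) `&` Af j) - mu (timg S (Af i) `&` Af j) |))%E.

End MeasureSide.

Section GroupSide.
Variables (G : topologicalType) (mulG : G -> G -> G) (invG : G -> G) (oneG : G).

Definition is_topological_group : Prop :=
  [/\ (forall x y z, mulG x (mulG y z) = mulG (mulG x y) z),
      (forall x, mulG oneG x = x), (forall x, mulG x oneG = x),
      (forall x, mulG (invG x) x = oneG) & (forall x, mulG x (invG x) = oneG)]
  /\ continuous (fun p : G * G => mulG p.1 p.2)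
  /\ continuous invG.

Definition first_countable : Prop :=
  forall x : G, exists B : nat -> set G,
    (forall n, nbhs x (B n)) /\
    (forall U, nbhs x U -> exists n, B n `<=` U).

Definition generates (S : set G) : Prop :=
  forall H : set G, H oneG -> (forall x y, H x -> H y -> H (mulG x y)) ->
    (forall x, H x -> H (invG x)) -> S `<=` H -> H = setT.

Definition unbounded (Gam : set G) : Prop :=
  forall C : set G, compact C -> ~ (Gam `<=` C).

End GroupSide.

(* index set of an at most countable family {K_i}: None = infinitely many
   members (indices 0,1,2,...), Some N = exactly N members (0-based indices
   0..N-1); member K_{i+1} of the paper is K i here. *)
Definition Kin (Kn : option nat) (i : nat) : bool :=
  if Kn is Some N then (i < N)%N else true.

Section Actions.
Variables (R : realType) (d : measure_display) (X : measurableType d)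
  (mu : probability X R) (Af : nat -> set X)
  (G : topologicalType) (mulG : G -> G -> G)
  (Gam : set G) (K : nat -> set G) (Kn : option nat).

Definition is_action (T : G -> tr X) : Prop :=
  [/\ (forall g, is_mpt mu (T g)),
      (forall g h, ({ae mu, forall x, (tfwd (T g) (tfwd (T h) x) = tfwd (T (mulG g h)) x)}))
    & (forall A B : set X, measurable A -> measurable B ->
         continuous (fun g : G => fine (mu (timg (T g) A `&` B)) : R))].

Definition gamma_mixing (T : G -> tr X) : Prop :=
  forall A B : set X, measurable A -> measurable B ->
  forall eps : R, 0 < eps ->
  exists C : set G, compact C /\
    forall g, Gam g -> ~ C g ->
      `| fine (mu (timg (T g) A `&` B)) - fine (mu A) * fine (mu B) | < eps.

Definition MGG : set (G -> tr X) := [set T | is_action T /\ gamma_mixing T].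

Definition dG (T S : G -> tr X) : \bar R :=
  (\sum_(i <oo | Kin Kn i) ((wt R i)%:E *
      ereal_sup [set dA mu Af (T g) (S g) | g in K i]))%E.

Definition mGG (T S : G -> tr X) : \bar R :=
  (dG T S + ereal_sup [set aA mu Af (T g) (S g) | g in Gam])%E.

(* Γ ∪ ⋃_{i <= n} K_i  (paper indices 1..n = 0-based indices < n) *)
Definition GamKn (n : nat) : set G :=
  Gam `|` [set g | exists i, [/\ Kin Kn i, (i < n)%N & K i g]].

Definition sNK (n k : nat) (T S : G -> tr X) : \bar R :=
  ereal_sup [set aAk mu Af k (T g) (S g) | g in GamKn n].

Definition sball (n k : nat) (eps : R) (T : G -> tr X) : set (G -> tr X) :=
  [set S | MGG S /\ (sNK n k T S < eps%:E)%E].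

Definition m_open (U : set (G -> tr X)) : Prop :=
  U `<=` MGG /\
  forall S, U S -> exists2 r : R, 0 < r &
    forall S', MGG S' -> (mGG S S' < r%:E)%E -> U S'.

End Actions.

(* Main.v *)
Require Import Defs.
From mathcomp Require Import all_boot all_order all_algebra.
From mathcomp Require Import all_classical all_reals all_analysis.
From mathcomp Require Import ring lra.
Import Order.TTheory GRing.Theory Num.Theory.
Import numFieldTopology.Exports numFieldNormedType.Exports.
Set Implicit Arguments. Unset Strict Implicit.
Local Open Scope classical_set_scope.
Local Open Scope ring_scope.


Section Basic.
Variables (R : realType) (d : measure_display) (X : measurableType d)
  (mu : probability X R).

Definition pm (A : set X) : R := fine (mu A).

Lemma muE A : measurable A -> mu A = (pm A)%:E.
Proof.
move=> mA; rewrite /pm fineK // ge0_fin_numE ?measure_ge0 //.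
by rewrite (le_lt_trans (probability_le1 _ mA)) // ltry.
Qed.

Lemma pm_ge0 A : 0 <= pm A.
Proof. by rewrite /pm fine_ge0 // measure_ge0. Qed.

Lemma pm_le1 A : measurable A -> pm A <= 1.
Proof. by move=> mA; rewrite -lee_fin -muE // probability_le1. Qed.

Lemma pm_le A B : measurable A -> measurable B -> A `<=` B -> pm A <= pm B.
Proof. by move=> mA mB AB; rewrite -lee_fin -!muE // le_measure ?inE. Qed.

Lemma pmDI A B : measurable A -> measurable B -> pm A = pm (A `\` B) + pm (A `&` B).
Proof.
move=> mA mB; apply/EFin_inj; rewrite EFinD -!muE //; last 2 first.
  exact: measurableI. exact: measurableD.
exact: measureDI.
Qed.

Lemma pmU A B : measurable A -> measurable B -> A `&` B = set0 -> pm (A `|` B) = pm A + pm B.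
Proof.
move=> mA mB AB; apply/EFin_inj; rewrite EFinD -!muE //; last exact: measurableU.
exact: measureU.
Qed.

Lemma pm_sd U V : measurable U -> measurable V ->
  pm (symdiff U V) = pm U + pm V - 2 * pm (U `&` V).
Proof.
move=> mU mV; rewrite /symdiff pmU //; [|exact: measurableD|exact: measurableD|].
  rewrite (pmDI mU mV) (pmDI mV mU) setIC; lra.
by apply/seteqP; split => [x [[? ?] [? ?]]|x []] //.
Qed.

Lemma pm_abs U V B : measurable U -> measurable V -> measurable B ->
  `| pm (U `&` B) - pm (V `&` B) | <= pm (symdiff U V).
Proof.
move=> mU mV mB.
have h : forall U V, measurable U -> measurable V ->
    pm (U `&` B) <= pm (V `&` B) + pm (U `\` V).
  move=> U0 V0 mU0 mV0; rewrite -pmU; [|exact: measurableI|exact: measurableD|].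
    by apply: pm_le; [exact: measurableI| apply: measurableU; [exact: measurableI|exact: measurableD]|
       move=> x [U0x Bx]; have [V0x|nV0x] := pselect (V0 x); [left|right]].
  by apply/seteqP; split => [x [[? ?] [? ?]]|x []] //.
have h1 := h U V mU mV; have h2 := h V U mV mU.
have e1 : pm (U `\` V) <= pm (symdiff U V).
  by apply: pm_le; [exact: measurableD| apply: measurableU; exact: measurableD| move=> x ?; left].
have e2 : pm (V `\` U) <= pm (symdiff U V).
  by apply: pm_le; [exact: measurableD| apply: measurableU; exact: measurableD| move=> x ?; right].
rewrite ler_norml; apply/andP; split; lra.
Qed.

End Basic.


Section MPT.
Variables (R : realType) (d : measure_display) (X : measurableType d)
  (mu : probability X R).

Lemma mpt_timg_m (P : tr X) B : is_mpt mu P -> measurable B -> measurable (timg P B).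
Proof. by move=> [[_ mb _ _] _] mB; rewrite /timg -[_ @^-1` _]setTI; exact: mb. Qed.

Lemma mpt_tpre_m (P : tr X) B : is_mpt mu P -> measurable B -> measurable (tpre P B).
Proof. by move=> [[mf _ _ _] _] mB; rewrite /tpre -[_ @^-1` _]setTI; exact: mf. Qed.

Lemma mpt_timg_pm (P : tr X) B : is_mpt mu P -> measurable B -> pm mu (timg P B) = pm mu B.
Proof. by move=> [[_ _ _ hb] _] mB; rewrite /pm /timg hb. Qed.

Lemma mpt_tpre_pm (P : tr X) B : is_mpt mu P -> measurable B -> pm mu (tpre P B) = pm mu B.
Proof. by move=> [[_ _ hf _] _] mB; rewrite /pm /tpre hf. Qed.

Lemma ae_eq_mu (N Y Z : set X) : measurable N -> mu N = 0%E -> measurable Y -> measurable Z ->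
  Y `\` N = Z `\` N -> mu Y = mu Z.
Proof.
move=> mN N0 mY mZ e.
rewrite (measureDI mu mY mN) (measureDI mu mZ mN) e.
rewrite (@subset_measure0 _ _ _ mu (Y `&` N) N (measurableI _ _ mY mN) mN (@subIsetr _ _ _) N0).
by rewrite (@subset_measure0 _ _ _ mu (Z `&` N) N (measurableI _ _ mZ mN) mN (@subIsetr _ _ _) N0).
Qed.

Lemma mpt_inv (P : tr X) A B : is_mpt mu P -> measurable A -> measurable B ->
  pm mu (tpre P A `&` B) = pm mu (timg P B `&` A).
Proof.
move=> hP mA mB; have [[mf mb hf hb] [ae1 ae2]] := hP.
have mfA := mpt_tpre_m hP mA; have mbB := mpt_timg_m hP mB.
rewrite /pm -hb; last exact: measurableI.
move: ae1 => [N [mN N0 sN]].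
congr fine; apply: (ae_eq_mu mN N0).
- by rewrite -[_ @^-1` _]setTI; apply: mb => //; exact: measurableI.
- exact: measurableI.
apply/seteqP; split => x [[/= h1 h2] nN].
  split => //; split => //.
  have : tfwd P (tbwd P x) = x by apply: contra_notP nN => h; exact: sN.
  by move=> <-.
split => //; split => //=.
have : tfwd P (tbwd P x) = x by apply: contra_notP nN => h; exact: sN.
by rewrite /tpre /= => ->.
Qed.

End MPT.


Lemma eqle {dd} {T : porderType dd} (x y : T) : x = y -> (x <= y)%O.
Proof. by move=> ->. Qed.

Section Series.
Variable R : realType.

Lemma wt_gt0 i : 0 < wt R i.
Proof. by rewrite /wt invr_gt0 exprn_gt0. Qed.

Lemma wt_ge0 i : 0 <= wt R i.
Proof. exact/ltW/wt_gt0. Qed.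

Lemma wt_le1 i : wt R i <= 1.
Proof. by rewrite /wt invf_le1 ?exprn_gt0 // exprn_ege1 // ler1n. Qed.

Lemma wtE i : wt R i = 1 / (2 ^ i.+1)%:R.
Proof. by rewrite /wt natrX div1r. Qed.

Lemma wt_inv i : (wt R i)^-1 = 2%:R ^+ i.+1.
Proof. by rewrite /wt invrK. Qed.

Lemma wt_addn i M : wt R (i + M) = wt R i * 2%:R ^- M.
Proof. by rewrite /wt -addSn exprD invfM. Qed.

Lemma sum_wt M : \sum_(0 <= i < M) wt R i = 1 - 2%:R ^- M.
Proof.
elim: M => [|M IH]; first by rewrite big_geq // expr0 invr1 subrr.
rewrite big_nat_recr //= IH /wt exprS invfM.
set y := (2%:R ^- M : R).
have h : y = y * 2^-1 + y * 2^-1 by exact: splitr.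
lra.
Qed.

Lemma sum_wt_le1 M : \sum_(0 <= i < M) wt R i <= 1.
Proof. by rewrite sum_wt lerBlDr lerDl invr_ge0 exprn_ge0. Qed.

Lemma wt_inv_le i n : (i < n)%N -> (wt R i)^-1 <= 2%:R ^+ n.
Proof. by move=> lt; rewrite wt_inv ler_eXn2l // ltr1n. Qed.

Local Open Scope ereal_scope.

Lemma SW (c : R) : (0 <= c)%R -> \sum_(i <oo) ((wt R i * c)%:E) <= c%:E.
Proof.
move=> c0; apply: le_trans (@epsilon_trick0 R c xpredT c0).
by apply/eqle/eq_eseriesr => i _; rewrite wtE mul1r mulrC.
Qed.

Lemma SB (f : nat -> \bar R) (M : nat) (c : R) : (forall i, 0 <= f i) ->
  (forall i, (M <= i)%N -> f i <= (wt R i * c)%:E) -> (0 <= c)%R ->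
  \sum_(i <oo) f i <= \sum_(0 <= i < M) f i + (c * 2%:R ^- M)%:E.
Proof.
move=> f0 fc c0; rewrite (nneseries_split 0 M) //; apply: leeD2l.
rewrite add0n -nneseries_addn //.
apply: (@le_trans _ _ (\sum_(i <oo) ((wt R i * (c * 2%:R ^- M))%:E))).
  apply: lee_nneseries => // i _; rewrite (le_trans (fc _ _)) ?leq_addl //.
  by rewrite wt_addn lee_fin; apply: eqle; ring.
apply: SW; rewrite mulr_ge0 // invr_ge0 exprn_ge0 //.
Qed.

Lemma term_le (f : nat -> \bar R) i : (forall i, 0 <= f i) -> f i <= \sum_(j <oo) f j.
Proof.
move=> f0; apply: (le_trans _ (nneseries_lim_ge i.+1 _)) => //.
by rewrite big_nat_recr //= leeDr // sume_ge0.
Qed.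

Lemma term_le_cond (f : nat -> \bar R) (P : pred nat) i : (forall i, P i -> 0 <= f i) -> P i ->
  f i <= \sum_(j <oo | P j) f j.
Proof.
move=> f0 Pi; rewrite (@nneseriesD1 R f i P f0 Pi) leeDl //.
by apply: nneseries_ge0 => n _ /andP[/f0].
Qed.

Lemma partial_le (f : nat -> \bar R) M : (forall i, 0 <= f i) ->
  \sum_(0 <= i < M) f i <= \sum_(i <oo) f i.
Proof. by move=> f0; apply: nneseries_lim_ge. Qed.

End Series.


Section Metrics.
Variables (R : realType) (d : measure_display) (X : measurableType d)
  (mu : probability X R) (Af : nat -> set X).
Hypothesis mAf : forall i, measurable (Af i).
Local Hint Resolve mAf : core.
Ltac mtac := repeat first [ done | apply: measurableU | apply: measurableD | apply: measurableI
  | apply: (mpt_timg_m (mu:=mu)) | apply: (mpt_tpre_m (mu:=mu)) ].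

Definition eA (P Q : tr X) i j : R :=
  `| pm mu (timg P (Af i) `&` Af j) - pm mu (timg Q (Af i) `&` Af j) |.

Definition aks k (P Q : tr X) : R :=
  \sum_(0 <= i < k) \sum_(0 <= j < k) (wt R i * wt R j * eA P Q i j).

Definition sdI (P Q : tr X) i := pm mu (symdiff (timg P (Af i)) (timg Q (Af i))).
Definition sdP (P Q : tr X) i := pm mu (symdiff (tpre P (Af i)) (tpre Q (Af i))).

Lemma eA_ge0 P Q i j : 0 <= eA P Q i j.
Proof. exact: normr_ge0. Qed.

Lemma eA_le1 P Q i j : is_mpt mu P -> is_mpt mu Q -> eA P Q i j <= 1.
Proof.
move=> hP hQ; rewrite /eA.
have := pm_ge0 mu (timg P (Af i) `&` Af j); have := pm_ge0 mu (timg Q (Af i) `&` Af j).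
have := pm_le1 mu (measurableI _ _ (mpt_timg_m hP (mAf i)) (mAf j)).
have := pm_le1 mu (measurableI _ _ (mpt_timg_m hQ (mAf i)) (mAf j)).
move=> *; rewrite ler_norml; apply/andP; split; lra.
Qed.

Lemma sdI_ge0 P Q i : 0 <= sdI P Q i. Proof. exact: pm_ge0. Qed.
Lemma sdP_ge0 P Q i : 0 <= sdP P Q i. Proof. exact: pm_ge0. Qed.

Lemma sdI_le1 P Q i : is_mpt mu P -> is_mpt mu Q -> sdI P Q i <= 1.
Proof.
by move=> hP hQ; rewrite /sdI; apply: pm_le1; mtac.
Qed.

Lemma sdP_le1 P Q i : is_mpt mu P -> is_mpt mu Q -> sdP P Q i <= 1.
Proof.
by move=> hP hQ; rewrite /sdP; apply: pm_le1; mtac.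
Qed.

Lemma eA_le_sdI P Q i j : is_mpt mu P -> is_mpt mu Q -> eA P Q i j <= sdI P Q i.
Proof. by move=> hP hQ; apply: pm_abs; mtac. Qed.

Local Open Scope ereal_scope.

Lemma aA_termE P Q i j : is_mpt mu P -> is_mpt mu Q ->
  ((wt R i * wt R j)%:E * `| mu (timg P (Af i) `&` Af j) - mu (timg Q (Af i) `&` Af j) |)
  = (wt R i * wt R j * eA P Q i j)%:E.
Proof.
move=> hP hQ.
rewrite !muE; [|by mtac|by mtac].
by rewrite -EFinB abse_EFin -EFinM.
Qed.

Lemma dA_termE P Q i : is_mpt mu P -> is_mpt mu Q ->
  (wt R i)%:E * (mu (symdiff (timg P (Af i)) (timg Q (Af i)))
      + mu (symdiff (tpre P (Af i)) (tpre Q (Af i))))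
  = (wt R i * (sdI P Q i + sdP P Q i))%:E.
Proof.
move=> hP hQ; rewrite /sdI /sdP !muE; last 2 first.
- by mtac.
- by mtac.
by rewrite -EFinD -EFinM.
Qed.

Lemma aAkE k P Q : is_mpt mu P -> is_mpt mu Q -> aAk mu Af k P Q = (aks k P Q)%:E.
Proof.
move=> hP hQ; rewrite /aAk /aks -sumEFin; apply: eq_bigr => i _.
by rewrite -sumEFin; apply: eq_bigr => j _; rewrite aA_termE.
Qed.

Lemma aAE P Q : is_mpt mu P -> is_mpt mu Q ->
  aA mu Af P Q = \sum_(i <oo) \sum_(j <oo) (wt R i * wt R j * eA P Q i j)%:E.
Proof.
move=> hP hQ; rewrite /aA; apply: eq_eseriesr => i _; apply: eq_eseriesr => j _.
exact: aA_termE.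
Qed.

Lemma dAE P Q : is_mpt mu P -> is_mpt mu Q ->
  dA mu Af P Q = \sum_(i <oo) (wt R i * (sdI P Q i + sdP P Q i))%:E.
Proof. by move=> hP hQ; rewrite /dA; apply: eq_eseriesr => i _; exact: dA_termE. Qed.

Lemma aks_ge0 k P Q : (0 <= aks k P Q)%R.
Proof.
rewrite /aks; apply: sumr_ge0 => i _; apply: sumr_ge0 => j _.
by rewrite !mulr_ge0 ?wt_ge0 ?eA_ge0.
Qed.

Lemma aAk_ge0 k P Q : is_mpt mu P -> is_mpt mu Q -> 0 <= aAk mu Af k P Q.
Proof. by move=> hP hQ; rewrite aAkE // lee_fin aks_ge0. Qed.

Lemma aA_ge0 P Q : is_mpt mu P -> is_mpt mu Q -> 0 <= aA mu Af P Q.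
Proof.
move=> hP hQ; rewrite aAE //; apply: nneseries_ge0 => i _ _.
apply: nneseries_ge0 => j _ _; by rewrite lee_fin !mulr_ge0 ?wt_ge0 ?eA_ge0.
Qed.

Lemma dA_ge0 P Q : is_mpt mu P -> is_mpt mu Q -> 0 <= dA mu Af P Q.
Proof.
move=> hP hQ; rewrite dAE //; apply: nneseries_ge0 => i _ _.
by rewrite lee_fin !mulr_ge0 ?wt_ge0 ?addr_ge0 ?sdI_ge0 ?sdP_ge0.
Qed.

End Metrics.


Section Ineqs.
Variables (R : realType) (d : measure_display) (X : measurableType d)
  (mu : probability X R) (Af : nat -> set X).
Hypothesis mAf : forall i, measurable (Af i).
Local Hint Resolve mAf : core.

Lemma aks_tri k P Q Q' : aks mu Af k P Q' <= aks mu Af k P Q + aks mu Af k Q Q'.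
Proof.
rewrite /aks -big_split /=; apply: ler_sum => i _; rewrite -big_split /=.
apply: ler_sum => j _; rewrite -mulrDr; apply: ler_wpM2l; first by rewrite mulr_ge0 ?wt_ge0.
rewrite /eA; set a := pm _ _; set b := pm _ _; set c := pm _ _.
by rewrite (_ : a - b = (a - c) + (c - b)) ?ler_normD //; ring.
Qed.

Lemma aks_refl k P : aks mu Af k P P = 0.
Proof.
rewrite /aks big1 // => i _; rewrite big1 // => j _.
by rewrite /eA subrr normr0 mulr0.
Qed.

Lemma aks_term k P Q i j : (i < k)%N -> (j < k)%N ->
  wt R i * wt R j * eA mu Af P Q i j <= aks mu Af k P Q.
Proof.
move=> ik jk; rewrite /aks.
have g0 : forall i, 0 <= \sum_(0 <= j < k) wt R i * wt R j * eA mu Af P Q i j.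
  by move=> i'; apply: sumr_ge0 => j' _; rewrite !mulr_ge0 ?wt_ge0 ?eA_ge0.
rewrite (bigD1_seq i) ?mem_index_iota ?iota_uniq //= -[X in X <= _]addr0.
apply: lerD; last by apply: sumr_ge0 => *; apply: g0.
rewrite (bigD1_seq j) ?mem_index_iota ?iota_uniq //= -[X in X <= _]addr0.
by apply: lerD => //; apply: sumr_ge0 => *; rewrite !mulr_ge0 ?wt_ge0 ?eA_ge0.
Qed.

Local Open Scope ereal_scope.

Lemma aAk_le_aA k P Q : is_mpt mu P -> is_mpt mu Q -> aAk mu Af k P Q <= aA mu Af P Q.
Proof.
move=> hP hQ; rewrite /aAk aAE //.
have t0 : forall i j, 0 <= (wt R i * wt R j * eA mu Af P Q i j)%:E.
  by move=> i j; rewrite lee_fin !mulr_ge0 ?wt_ge0 ?eA_ge0.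
apply: (@le_trans _ _ (\sum_(0 <= i < k) \sum_(j <oo) (wt R i * wt R j * eA mu Af P Q i j)%:E)).
  apply: lee_sum => i _; apply: (le_trans _ (partial_le k _)) => //.
  by apply: eqle; apply: eq_bigr => j _; rewrite aA_termE.
apply: partial_le => i; exact: nneseries_ge0.
Qed.

Lemma aAk_le_dA k P Q : is_mpt mu P -> is_mpt mu Q -> aAk mu Af k P Q <= dA mu Af P Q.
Proof.
move=> hP hQ; rewrite aAkE // dAE //.
apply: (le_trans _ (partial_le k _)); last first.
  by move=> i; rewrite lee_fin !mulr_ge0 ?wt_ge0 ?addr_ge0 ?sdI_ge0 ?sdP_ge0.
rewrite sumEFin lee_fin /aks; apply: ler_sum => i _.
apply: (@le_trans _ _ (\sum_(0 <= j < k) wt R i * wt R j * sdI mu Af P Q i)%R).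
  apply: ler_sum => j _; apply: ler_wpM2l; first by rewrite mulr_ge0 ?wt_ge0.
  exact: eA_le_sdI.
rewrite -big_distrl /= -big_distrr /= -mulrA; apply: ler_wpM2l; first exact: wt_ge0.
have := sum_wt_le1 R k; have := sdP_ge0 mu Af P Q i; have := sdI_ge0 mu Af P Q i.
have := @sumr_ge0 R _ (index_iota 0 k) xpredT (wt R) (fun i _ => wt_ge0 R i).
move=> *; nra.
Qed.

Lemma dA_le2 P Q : is_mpt mu P -> is_mpt mu Q -> dA mu Af P Q <= 2%:E.
Proof.
move=> hP hQ; rewrite dAE //; apply: (le_trans _ (@SW R 2%R _)); last by [].
apply: lee_nneseries => i _.
  by rewrite lee_fin !mulr_ge0 ?wt_ge0 ?addr_ge0 ?sdI_ge0 ?sdP_ge0.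
rewrite lee_fin; apply: ler_wpM2l; first exact: wt_ge0.
by have := sdI_le1 mAf i hP hQ; have := sdP_le1 mAf i hP hQ; lra.
Qed.

Lemma dA_small P Q (M : nat) (eta : R) : is_mpt mu P -> is_mpt mu Q -> (0 <= eta)%R ->
  (forall m, (m < M)%N -> sdI mu Af P Q m <= eta /\ sdP mu Af P Q m <= eta)%R ->
  dA mu Af P Q <= (2 * eta + 2 * 2%:R ^- M)%:E.
Proof.
move=> hP hQ eta0 hm; rewrite dAE //.
apply: le_trans (SB (M:=M) (c:=2) _ _ _) _ => //.
- by move=> i; rewrite lee_fin !mulr_ge0 ?wt_ge0 ?addr_ge0 ?sdI_ge0 ?sdP_ge0.
- move=> i _; rewrite lee_fin; apply: ler_wpM2l; first exact: wt_ge0.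
  by have := sdI_le1 mAf i hP hQ; have := sdP_le1 mAf i hP hQ; lra.
rewrite EFinD leeD2r // sumEFin lee_fin.
apply: (@le_trans _ _ (\sum_(0 <= i < M) (wt R i * (2 * eta)))%R).
  rewrite big_nat [X in (_ <= X)%R]big_nat; apply: ler_sum => i /andP[_ iM].
  apply: ler_wpM2l; first exact: wt_ge0.
  by have [] := hm i iM; lra.
rewrite -big_distrl /=; have := sum_wt_le1 R M; nra.
Qed.

Lemma aA_le P Q k : is_mpt mu P -> is_mpt mu Q ->
  aA mu Af P Q <= (aks mu Af k P Q + 2 * 2%:R ^- k)%:E.
Proof.
move=> hP hQ; rewrite aAE //.
set t := fun i j => (wt R i * wt R j * eA mu Af P Q i j)%R.
have t0 : forall i j, (0 <= t i j)%R by move=> i j; rewrite !mulr_ge0 ?wt_ge0 ?eA_ge0.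
have inner : forall i, \sum_(j <oo) (t i j)%:E <=
     (\sum_(0 <= j < k) t i j + wt R i * 2%:R ^- k)%:E.
  move=> i; apply: le_trans (SB (M:=k) (c:=wt R i) _ _ _) _ => //.
  - by move=> j; rewrite lee_fin.
  - move=> j _; rewrite lee_fin /t [X in (_ <= X)%R]mulrC.
    rewrite -[X in (_ <= X)%R]mulr1; apply: ler_wpM2l; first by rewrite mulr_ge0 ?wt_ge0.
    exact: eA_le1.
  - exact: wt_ge0.
  by rewrite sumEFin EFinD.
have inner1 : forall i, (\sum_(j <oo) (t i j)%:E) <= (wt R i * 1)%:E.
  move=> i; apply: le_trans (_ : \sum_(j <oo) ((wt R j * wt R i)%:E) <= _).
    apply: lee_nneseries => j _; first by rewrite lee_fin.
    rewrite lee_fin /t [X in (_ <= X)%R]mulrC.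
    rewrite -[X in (_ <= X)%R]mulr1; apply: ler_wpM2l; first by rewrite mulr_ge0 ?wt_ge0.
    exact: eA_le1.
  by rewrite mulr1; apply: SW; exact: wt_ge0.
apply: le_trans (SB (M:=k) (c:=1) _ _ _) _ => //.
- by move=> i; apply: nneseries_ge0 => j _ _; rewrite lee_fin; exact: (t0 i j).
- by move=> i _; exact: inner1.
apply: (@le_trans _ _ ((\sum_(0 <= i < k) (\sum_(0 <= j < k) t i j + wt R i * 2%:R ^- k))%:E
   + (1 * 2%:R ^- k)%:E)).
  by apply: leeD2r; rewrite -sumEFin; apply: lee_sum => i _; exact: inner.
rewrite -EFinD lee_fin big_split /= -big_distrl /= /aks.
have := sum_wt_le1 R k; have : (0 <= 2%:R ^- k :> R)%R by rewrite invr_ge0 exprn_ge0.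
rewrite /t; move=> *; nra.
Qed.

End Ineqs.


Lemma fin_choice (P : nat -> nat -> Prop) N :
  (forall p k k', (k <= k')%N -> P p k -> P p k') ->
  (forall p, (p < N)%N -> exists k, P p k) -> exists k, forall p, (p < N)%N -> P p k.
Proof.
move=> mono; elim: N => [|N IH] h; first by exists 0%N.
have [k1 hk1] := IH (fun p pN => h p (leq_trans pN (leqnSn N))).
have [k2 hk2] := h N (ltnSn N).
exists (maxn k1 k2) => p; rewrite ltnS leq_eqVlt => /orP[/eqP ->|pN].
  by apply: mono hk2; rewrite leq_maxr.
by apply: mono (hk1 p pN); rewrite leq_maxl.
Qed.

Lemma cover_fin (R : realType) (G : topologicalType) (K : set G) (f : nat -> G -> R) (c : nat -> R) :
  compact K -> (forall j, continuous (f j)) -> (forall g, K g -> exists j, c j < f j g) ->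
  exists k0, forall g, K g -> exists2 j, (j < k0)%N & c j < f j g.
Proof.
move=> cK fc hK.
have := (proj1 (compact_near_coveringP K) cK) nat \oo
  (fun k g => exists2 j, (j < k)%N & c j < f j g) _.
have /[swap]/[apply] : forall x, K x -> \forall x' \near x & k \near \oo,
    exists2 j, (j < k)%N & c j < f j x'.
  move=> x Kx; have [j hj] := hK x Kx.
  have nx : \forall x' \near x, c j < f j x'.
    have := fc j x; move=> /(_ [set y | c j < y]) h; apply: h; apply: open_nbhs_nbhs; split => //; exact: open_gt.
  exists ([set x' | c j < f j x'], [set k | (j < k)%N]) => /=.
    by split; [exact: nx | exists j.+1].
  by move=> [x' k] /= [h1 h2]; exists j.
move=> [N0 _ hN0]; exists N0 => g Kg; exact: (hN0 N0 (leqnn N0) g Kg).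
Qed.

Section Key.
Variables (R : realType) (d : measure_display) (X : measurableType d)
  (mu : probability X R) (Af : nat -> set X).
Hypothesis mAf : forall i, measurable (Af i).
Local Hint Resolve mAf : core.
Ltac mtac := repeat first [ done | apply: measurableU | apply: measurableD | apply: measurableI
  | apply: (mpt_timg_m (mu:=mu)) | apply: (mpt_tpre_m (mu:=mu)) ].

Lemma symdiffC (A B : set X) : symdiff A B = symdiff B A.
Proof. by rewrite /symdiff setUC. Qed.

Lemma key_timg (P Q : tr X) m j (del : R) : is_mpt mu P -> is_mpt mu Q ->
  pm mu (symdiff (timg P (Af m)) (Af j)) < del ->
  sdI mu Af P Q m <= 4 * del + 2 * eA mu Af P Q m j.
Proof.
move=> hP hQ h; rewrite /sdI /eA.
set U := timg P (Af m); set U' := timg Q (Af m).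
have mU : measurable U by mtac. have mU' : measurable U' by mtac.
rewrite pm_sd // /U /U' !mpt_timg_pm // -/U -/U'.
have h1 := pm_abs mu mU (mAf j) mU'.
have h2 := pm_abs mu (mAf j) mU mU.
rewrite symdiffC setIid (mpt_timg_pm hP (mAf m)) in h2.
rewrite [Af j `&` U']setIC in h1.
rewrite [Af j `&` U]setIC in h2.
move: h1 h2; rewrite !ler_norml => /andP[h1 h1'] /andP[h2 h2'].
set e := `|_| ; have : pm mu (U `&` Af j) - pm mu (U' `&` Af j) <= e by exact: ler_norm.
lra.
Qed.

Lemma key_tpre (P Q : tr X) m j (del : R) : is_mpt mu P -> is_mpt mu Q ->
  pm mu (symdiff (tpre P (Af m)) (Af j)) < del ->
  sdP mu Af P Q m <= 4 * del + 2 * eA mu Af P Q j m.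
Proof.
move=> hP hQ h; rewrite /sdP /eA.
set V := tpre P (Af m); set V' := tpre Q (Af m).
have mV : measurable V by mtac. have mV' : measurable V' by mtac.
rewrite pm_sd // /V /V' !mpt_tpre_pm // -/V -/V'.
have h1 := pm_abs mu mV (mAf j) mV'.
have h2 := pm_abs mu (mAf j) mV mV.
rewrite symdiffC setIid (mpt_tpre_pm hP (mAf m)) in h2.
rewrite [Af j `&` V']setIC /V' mpt_inv // -/V' in h1.
rewrite [Af j `&` V]setIC /V mpt_inv // -/V in h2.
move: h1 h2; rewrite !ler_norml => /andP[h1 h1'] /andP[h2 h2'].
set e := `|_| ; have : pm mu (timg P (Af j) `&` Af m) - pm mu (timg Q (Af j) `&` Af m) <= e.
  exact: ler_norm.
lra.
Qed.

Lemma eA_bound k P Q m j : (m < k)%N -> (j < k)%N ->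
  eA mu Af P Q m j <= 2%:R ^+ k * 2%:R ^+ k * aks mu Af k P Q.
Proof.
move=> mk jk; have h := aks_term mu Af P Q mk jk.
have wm := wt_gt0 R m; have wj := wt_gt0 R j.
have e : eA mu Af P Q m j = (wt R m)^-1 * (wt R j)^-1 * (wt R m * wt R j * eA mu Af P Q m j).
  by field; rewrite !gt_eqF.
have im : 0 <= (wt R m)^-1 by rewrite invr_ge0 ltW.
have ij : 0 <= (wt R j)^-1 by rewrite invr_ge0 ltW.
rewrite e; apply: ler_pM.
- exact: mulr_ge0.
- by apply: mulr_ge0; [apply: mulr_ge0; apply: ltW|exact: eA_ge0].
- by apply: ler_pM => //; apply: wt_inv_le.
- exact: h.
Qed.

End Key.


Section Main.
Variables (R : realType) (d : measure_display) (X : measurableType d)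
  (mu : probability X R) (Af : nat -> set X)
  (G : topologicalType) (mulG : G -> G -> G)
  (Gam : set G) (K : nat -> set G) (Kn : option nat).
Hypothesis mAf : forall i, measurable (Af i).
Hypothesis Gam0 : exists g0, Gam g0.
Hypothesis hK : forall i, Kin Kn i -> compact (K i) /\ exists g, K i g.

Local Notation MG := (MGG mu mulG Gam).

Lemma MGG_mpt T : MG T -> forall g, is_mpt mu (T g).
Proof. by case=> [[]]. Qed.

Local Open Scope ereal_scope.
Ltac mp := first [ by [] | match goal with H : forall g, is_mpt _ (?S g) |- is_mpt _ (?S _) => exact: H end ].

Definition sig_i (S S' : G -> tr X) i := ereal_sup [set dA mu Af (S g) (S' g) | g in K i].
Definition supG (S S' : G -> tr X) := ereal_sup [set aA mu Af (S g) (S' g) | g in Gam].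

Lemma sig_ge0 S S' i : MG S -> MG S' -> Kin Kn i -> 0 <= sig_i S S' i.
Proof.
move=> hS hS' Ki; have mS := MGG_mpt hS; have mS' := MGG_mpt hS'; have [_ [g Kg]] := hK Ki.
apply: le_trans (ereal_sup_ubound _); last by exists g.
by apply: dA_ge0; mp.
Qed.

Lemma supG_ge0 S S' : MG S -> MG S' -> 0 <= supG S S'.
Proof.
move=> hS hS'; have mS := MGG_mpt hS; have mS' := MGG_mpt hS'; have [g Gg] := Gam0.
apply: le_trans (ereal_sup_ubound _); last by exists g.
by apply: aA_ge0; mp.
Qed.

Lemma dG_ge0 S S' : MG S -> MG S' -> 0 <= dG mu Af K Kn S S'.
Proof.
move=> hS hS'; have mS := MGG_mpt hS; have mS' := MGG_mpt hS'; apply: nneseries_ge0 => i _ Ki.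
by apply: mule_ge0; [rewrite lee_fin wt_ge0 | exact: sig_ge0].
Qed.

Lemma dG_le_m S S' : MG S -> MG S' -> dG mu Af K Kn S S' <= mGG mu Af Gam K Kn S S'.
Proof. by move=> hS hS'; have mS := MGG_mpt hS; have mS' := MGG_mpt hS'; rewrite /mGG leeDl //; exact: supG_ge0. Qed.

Lemma supG_le_m S S' : MG S -> MG S' -> supG S S' <= mGG mu Af Gam K Kn S S'.
Proof. by move=> hS hS'; have mS := MGG_mpt hS; have mS' := MGG_mpt hS'; rewrite /mGG leeDr //; exact: dG_ge0. Qed.

Lemma m_ge0 S S' : MG S -> MG S' -> 0 <= mGG mu Af Gam K Kn S S'.
Proof. by move=> hS hS'; have mS := MGG_mpt hS; have mS' := MGG_mpt hS'; apply: le_trans (dG_le_m hS hS'); exact: dG_ge0. Qed.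

Lemma sig_le_dG S S' i : MG S -> MG S' -> Kin Kn i ->
  (wt R i)%:E * sig_i S S' i <= dG mu Af K Kn S S'.
Proof.
move=> hS hS' Ki; have mS := MGG_mpt hS; have mS' := MGG_mpt hS'; apply: (@term_le_cond R (fun i => (wt R i)%:E * sig_i S S' i) (Kin Kn) i) => //.
by move=> j Kj; apply: mule_ge0; [rewrite lee_fin wt_ge0 | exact: sig_ge0].
Qed.

Lemma aks_le_m S S' n k g : MG S -> MG S' -> GamKn Gam K Kn n g ->
  ((aks mu Af k (S g) (S' g))%:E <= (2%:R ^+ n)%:E * mGG mu Af Gam K Kn S S').
Proof.
move=> hS hS'; have mS := MGG_mpt hS; have mS' := MGG_mpt hS'.
case=> [Gg|[i [Ki iN Kig]]].
- have h1 : (aks mu Af k (S g) (S' g))%:E <= mGG mu Af Gam K Kn S S'.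
    rewrite -aAkE //; apply: le_trans (supG_le_m hS hS').
    apply: le_trans (aAk_le_aA mAf k (mS g) (mS' g)) _.
    by apply: ereal_sup_ubound; exists g.
  apply: le_trans h1 _; rewrite -[X in X <= _]mul1e; apply: lee_wpmul2r; first exact: m_ge0.
  by rewrite lee_fin exprn_ege1 // ler1n.
- have h1 : (aks mu Af k (S g) (S' g))%:E <= sig_i S S' i.
    rewrite -aAkE //; apply: le_trans (aAk_le_dA mAf k (mS g) (mS' g)) _.
    by apply: ereal_sup_ubound; exists g.
  have h2 := sig_le_dG hS hS' Ki.
  have h3 := dG_le_m hS hS'.
  have h4 : (wt R i)%:E * (aks mu Af k (S g) (S' g))%:E <= mGG mu Af Gam K Kn S S'.
    apply: le_trans (le_trans h2 h3).
    by apply: lee_wpmul2l => //; rewrite lee_fin wt_ge0.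
  rewrite -lee_pdivlMl ?wt_gt0 // in h4.
  apply: le_trans h4 _; apply: lee_wpmul2r; first exact: m_ge0.
  by rewrite lee_fin; apply: wt_inv_le.
Qed.

Lemma part1 n k (eps : R) T : (0 < eps)%R -> MG T ->
  m_open mu Af mulG Gam K Kn (sball mu Af mulG Gam K Kn n k eps T).
Proof.
move=> eps0 hT; have mT := MGG_mpt hT; split; first by move=> S [].
move=> S [hS sS]; have mS := MGG_mpt hS.
set s := sNK mu Af Gam K Kn n k T S in sS *.
have s0 : 0 <= s.
  have [g Gg] := Gam0; apply: le_trans (ereal_sup_ubound _); last by exists g; first by left.
  exact: (aAk_ge0 mAf k (mT g) (mS g)).
have sfin : s = (fine s)%:E by rewrite fineK // ge0_fin_numE // (lt_trans sS) // ltry.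
have fs : (fine s < eps)%R by rewrite -lte_fin -sfin.
pose C : R := (2%:R ^+ n)%R. have C0 : (0 < C)%R by rewrite exprn_gt0.
exists ((eps - fine s) / C)%R; first by rewrite divr_gt0 // subr_gt0.
move=> S' hS' hm; split => //; have mS' := MGG_mpt hS'.
set m := mGG mu Af Gam K Kn S S' in hm.
have m0 : 0 <= m := m_ge0 hS hS'.
have mfin : m = (fine m)%:E by rewrite fineK // ge0_fin_numE // (lt_trans hm) // ltry.
have fm : (fine m < (eps - fine s) / C)%R by rewrite -lte_fin -mfin.
apply: (@le_lt_trans _ _ (fine s + C * fine m)%R%:E); last first.
  rewrite lte_fin; rewrite ltr_pdivlMr // in fm; lra.
apply: ge_ereal_sup => _ [g hg <-].
rewrite (aAkE mAf k (mT g) (mS' g)) lee_fin.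
apply: le_trans (aks_tri mu Af k (T g) (S g) (S' g)) _.
apply: lerD.
  have : (aks mu Af k (T g) (S g))%:E <= s.
    by rewrite -(aAkE mAf k (mT g) (mS g)); apply: ereal_sup_ubound; exists g.
  by rewrite sfin lee_fin.
by have := aks_le_m k hS hS' hg; rewrite -/m mfin -EFinM lee_fin.
Qed.

Local Close Scope ereal_scope.

Hypothesis dense : forall B : set X, measurable B -> forall eps : R, 0 < eps ->
     exists i, (mu (symdiff (Af i) B) < eps%:E)%E.

Lemma compact_choice (S : G -> tr X) (del : R) i m : MG S -> Kin Kn i -> 0 < del ->
  exists k0, forall g, K i g ->
    (exists2 j, (j < k0)%N & pm mu (symdiff (timg (S g) (Af m)) (Af j)) < del) /\
    (exists2 j, (j < k0)%N & pm mu (symdiff (tpre (S g) (Af m)) (Af j)) < del).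
Proof.
move=> hS Ki del0; have mS := MGG_mpt hS.
have [_ _ cont] := hS.1.
have [cK _] := hK Ki.
pose c j := (pm mu (Af m) + pm mu (Af j) - del) / 2.
have cov1 : forall g, K i g -> exists j, c j < fine (mu (timg (S g) (Af m) `&` Af j)).
  move=> g Kg; have mB := mpt_timg_m (mS g) (mAf m).
  have [j hj] := dense mB del0; exists j.
  rewrite symdiffC (muE _ (measurableU _ _ (measurableD mB (mAf j)) (measurableD (mAf j) mB))) lte_fin in hj.
  move: hj; rewrite pm_sd // (mpt_timg_pm (mS g) (mAf m)).
  by rewrite /c /pm; lra.
have cov2 : forall g, K i g -> exists j, c j < fine (mu (timg (S g) (Af j) `&` Af m)).
  move=> g Kg; have mB := mpt_tpre_m (mS g) (mAf m).
  have [j hj] := dense mB del0; exists j.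
  rewrite symdiffC (muE _ (measurableU _ _ (measurableD mB (mAf j)) (measurableD (mAf j) mB))) lte_fin in hj.
  move: hj; rewrite pm_sd // (mpt_tpre_pm (mS g) (mAf m)) (mpt_inv (mS g) (mAf m) (mAf j)).
  by rewrite /c /pm; lra.
have [k1 hk1] := @cover_fin R G (K i) (fun j g => fine (mu (timg (S g) (Af m) `&` Af j))) c cK
  (fun j => cont _ _ (mAf m) (mAf j)) cov1.
have [k2 hk2] := @cover_fin R G (K i) (fun j g => fine (mu (timg (S g) (Af j) `&` Af m))) c cK
  (fun j => cont _ _ (mAf j) (mAf m)) cov2.
exists (maxn k1 k2) => g Kg; split.
  have [j jk hj] := hk1 g Kg; exists j; first by apply: leq_trans jk (leq_maxl _ _).
  have mB := mpt_timg_m (mS g) (mAf m).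
  rewrite pm_sd // (mpt_timg_pm (mS g) (mAf m)); rewrite /c in hj; rewrite /pm in hj *; lra.
have [j jk hj] := hk2 g Kg; exists j; first by apply: leq_trans jk (leq_maxr _ _).
have mB := mpt_tpre_m (mS g) (mAf m).
rewrite pm_sd // (mpt_tpre_pm (mS g) (mAf m)) (mpt_inv (mS g) (mAf m) (mAf j)).
rewrite /c in hj; rewrite /pm in hj *; lra.
Qed.

Lemma pow_inv_le (N k : nat) : (N <= k)%N -> 2%:R ^- k <= (2%:R ^- N : R).
Proof.
move=> Nk; rewrite -!exprVn.
have h1 : 0 <= (2%:R^-1 : R) by rewrite invr_ge0 ler0n.
have h2 : (2%:R^-1 : R) <= 1 by rewrite invf_le1 // ler1n.
exact: (ler_wiXn2l h1 h2 Nk).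
Qed.

Lemma part2 (U : set (G -> tr X)) S : m_open mu Af mulG Gam K Kn U -> U S ->
  exists (n k : nat) (eps : R) (T : G -> tr X),
       [/\ (0 < n)%N, (0 < k)%N, 0 < eps, MG T &
           sball mu Af mulG Gam K Kn n k eps T S] /\
       sball mu Af mulG Gam K Kn n k eps T `<=` U.
Proof.
move=> [UM hU] US; have hS := UM S US; have mS := MGG_mpt hS.
have [r r0 hr] := hU S US.
pose b := Num.bound (12 / r).
pose N := b.+1.
have N0 : (0 < N)%N by [].
have hN : 12 / r < 2%:R ^+ N.
  apply: lt_trans (archi_boundP _) _; first by rewrite divr_ge0 // ltW.
  rewrite -natrX ltr_nat; apply: ltn_trans (ltn_expl _ _); by [].
have hN' : 12 * 2%:R ^- N < r.
  have p : 0 < (2%:R ^+ N : R) by rewrite exprn_gt0.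
  rewrite ltr_pdivrMr // in hN.
  have q : (2%:R ^- N : R) * 2%:R ^+ N = 1 by rewrite mulVf ?gt_eqF.
  have q0 : 0 < (2%:R ^- N : R) by rewrite invr_gt0.
  nra.
pose del := r / 64.
have del0 : 0 < del by rewrite divr_gt0.
have [k0 hk0] : exists k0, forall i, (i < N)%N -> forall m, (m < N)%N -> Kin Kn i ->
    forall g, K i g ->
    (exists2 j, (j < k0)%N & pm mu (symdiff (timg (S g) (Af m)) (Af j)) < del) /\
    (exists2 j, (j < k0)%N & pm mu (symdiff (tpre (S g) (Af m)) (Af j)) < del).
  apply: fin_choice.
    move=> i k k' kk' h m mN Ki g Kg; have [[j jk hj] [j' jk' hj']] := h m mN Ki g Kg.
    by split; [exists j|exists j'] => //; apply: leq_trans kk'.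
  move=> i iN; apply: (@fin_choice (fun m k => Kin Kn i -> forall g, K i g ->
    (exists2 j, (j < k)%N & pm mu (symdiff (timg (S g) (Af m)) (Af j)) < del) /\
    (exists2 j, (j < k)%N & pm mu (symdiff (tpre (S g) (Af m)) (Af j)) < del)) N).
    move=> m k k' kk' h Ki g Kg; have [[j jk hj] [j' jk' hj']] := h Ki g Kg.
    by split; [exists j|exists j'] => //; apply: leq_trans kk'.
  move=> m mN; have [Ki|nKi] := boolP (Kin Kn i); last by exists 0%N.
  have [k hk] := compact_choice m hS Ki del0.
  by exists k.
pose k := maxn k0 N.
have Nk : (N <= k)%N by rewrite leq_maxr.
have k0k : (k0 <= k)%N by rewrite leq_maxl.
pose P2 : R := 2%:R ^+ k * 2%:R ^+ k.
have P20 : 0 < P2 by rewrite mulr_gt0 // exprn_gt0.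
have P21 : 1 <= P2 by rewrite mulr_ege1 // exprn_ege1 // ler1n.
pose eps := r / (32 * P2).
have eps0 : 0 < eps by rewrite divr_gt0 // mulr_gt0.
have epsP : eps * P2 = r / 32 by rewrite /eps; field; rewrite gt_eqF.
exists N, k, eps, S; split.
  split => //; first by apply: leq_trans Nk.
  split => //; apply: (@le_lt_trans _ _ 0%E); last by rewrite lte_fin.
  apply: ge_ereal_sup => _ [g _ <-].
  by rewrite (aAkE mAf k (mS g) (mS g)) aks_refl.
move=> S' [hS' sS']; have mS' := MGG_mpt hS'; apply: hr => //.
have hks : forall g, GamKn Gam K Kn N g -> aks mu Af k (S g) (S' g) < eps.
  move=> g hg; rewrite -lte_fin -(aAkE mAf k (mS g) (mS' g)).
  by apply: le_lt_trans sS'; apply: ereal_sup_ubound; exists g.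
have hsup : (supG S S' <= (eps + 2 * 2%:R ^- k)%:E)%E.
  apply: ge_ereal_sup => _ [g Gg <-].
  apply: le_trans (aA_le mAf k (mS g) (mS' g)) _; rewrite lee_fin lerD2r.
  by apply: ltW; apply: hks; left.
have hsd : forall i, (i < N)%N -> Kin Kn i -> forall g, K i g -> forall m, (m < N)%N ->
    sdI mu Af (S g) (S' g) m <= r / 8 /\ sdP mu Af (S g) (S' g) m <= r / 8.
  move=> i iN Ki g Kg m mN.
  have hg : GamKn Gam K Kn N g by right; exists i.
  have ak := hks g hg.
  have mk : (m < k)%N by apply: leq_trans mN Nk.
  have [[j jk hj] [j' jk' hj']] := hk0 i iN m mN Ki g Kg.
  have jk2 : (j < k)%N by apply: leq_trans jk k0k.
  have jk2' : (j' < k)%N by apply: leq_trans jk' k0k.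
  have e1 := eA_bound mu Af (S g) (S' g) mk jk2.
  have e2 := eA_bound mu Af (S g) (S' g) jk2' mk.
  have k1 := key_timg mAf (mS g) (mS' g) hj.
  have k2 := key_tpre mAf (mS g) (mS' g) hj'.
  rewrite -/P2 in e1 e2.
  have a0 := aks_ge0 mu Af k (S g) (S' g).
  have : P2 * aks mu Af k (S g) (S' g) <= r / 32.
    by rewrite -epsP mulrC; apply: ler_wpM2r; [exact: ltW|exact: ltW].
  rewrite /del in k1 k2; move=> *; split; lra.
have hsig : forall i, (i < N)%N -> Kin Kn i ->
    (sig_i S S' i <= (2 * (r / 8) + 2 * 2%:R ^- N)%:E)%E.
  move=> i iN Ki; apply: ge_ereal_sup => _ [g Kg <-].
  apply: dA_small => //; first by rewrite divr_ge0 // ltW.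
  exact: (hsd i iN Ki g Kg).
have hsig2 : forall i, (sig_i S S' i <= 2%:E)%E.
  by move=> i; apply: ge_ereal_sup => _ [g Kg <-]; apply: dA_le2.
have D0 : 0 <= 2 * (r / 8) + 2 * 2%:R ^- N.
  by rewrite addr_ge0 // mulr_ge0 // ?divr_ge0 ?ltW // invr_ge0 exprn_ge0.
have hdG : (dG mu Af K Kn S S' <= (2 * (r / 8) + 2 * 2%:R ^- N + 2 * 2%:R ^- N)%:E)%E.
  rewrite /dG eseries_mkcond.
  apply: le_trans (SB (M:=N) (c:=2) _ _ _) _ => //.
  - move=> i; case: ifP => Ki //.
    by apply: mule_ge0; [rewrite lee_fin wt_ge0 | exact: sig_ge0].
  - move=> i _; case: ifP => Ki; last by rewrite lee_fin mulr_ge0 ?wt_ge0.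
    by rewrite EFinM; apply: lee_wpmul2l; [rewrite lee_fin wt_ge0 | exact: hsig2].
  rewrite EFinD leeD2r //.
  apply: (@le_trans _ _ (\sum_(0 <= i < N) ((wt R i * (2 * (r / 8) + 2 * 2%:R ^- N))%:E))%E).
    rewrite big_nat [X in (_ <= X)%E]big_nat; apply: lee_sum => i /andP[_ iN].
    case: ifP => Ki; last by rewrite lee_fin mulr_ge0 ?wt_ge0.
    by rewrite EFinM; apply: lee_wpmul2l; [rewrite lee_fin wt_ge0 | exact: hsig].
  rewrite sumEFin lee_fin -big_distrl /=.
  have := sum_wt_le1 R N; nra.
apply: (@le_lt_trans _ _ ((2 * (r / 8) + 2 * 2%:R ^- N + 2 * 2%:R ^- N) + (eps + 2 * 2%:R ^- k))%:E).
  by rewrite /mGG EFinD; apply: leeD.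
rewrite lte_fin.
have := pow_inv_le Nk.
have : eps <= r / 32.
  rewrite -epsP -[X in X <= _]mulr1; apply: ler_wpM2l => //; exact: ltW.
have : 0 <= (2%:R ^- N : R) by rewrite invr_ge0 exprn_ge0.
move=> *; lra.
Qed.

End Main.


Theorem mainTheorem10
  (R : realType) (d : measure_display) (X : measurableType d)
  (mu : probability X R) (Af : nat -> set X)
  (G : topologicalType) (mulG : G -> G -> G) (invG : G -> G) (oneG : G)
  (Gam : set G) (K : nat -> set G) (Kn : option nat) :
  (* (X, Σ, μ): separable Lebesgue space, non-atomic probability measure *)
  nonatomic_lebesgue_space mu ->
  (* {A_i} generates Σ and is dense in Σ *)
  (forall i, measurable (Af i)) ->
  (@measurable _ X = <<s range Af >>) ->
  (forall B : set X, measurable B -> forall eps : R, 0 < eps ->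
     exists i, (mu (symdiff (Af i) B) < eps%:E)%E) ->
  (* G: Hausdorff locally compact group with countable neighborhood base *)
  is_topological_group mulG invG oneG ->
  hausdorff_space G -> locally_compact [set: G] -> first_countable G ->
  (* {K_i}: compact sets with nonempty interiors, union contains a generating set *)
  (forall i, Kin Kn i -> compact (K i) /\ (exists g, (K i)° g)) ->
  (exists S : set G, S `<=` \bigcup_(i in [set i | Kin Kn i]) K i /\
                     generates mulG invG oneG S) ->
  (* Γ unbounded *)
  unbounded Gam ->
  (* the sets (s^{(n,k)}, T, ε) form a base of the m_{G,Γ}-topology on M_{G,Γ} *)
  (forall (n k : nat) (eps : R) (T : G -> tr X),
     (0 < n)%N -> (0 < k)%N -> 0 < eps -> MGG mu mulG Gam T ->
     m_open mu Af mulG Gam K Kn (sball mu Af mulG Gam K Kn n k eps T)) /\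
  (forall U : set (G -> tr X), m_open mu Af mulG Gam K Kn U ->
     forall S, U S ->
     exists (n k : nat) (eps : R) (T : G -> tr X),
       [/\ (0 < n)%N, (0 < k)%N, 0 < eps, MGG mu mulG Gam T &
           sball mu Af mulG Gam K Kn n k eps T S] /\
       sball mu Af mulG Gam K Kn n k eps T `<=` U).
Proof.
move=> _ mAf _ dense _ _ _ _ hK0 _ unb.
have Gam0 : exists g0, Gam g0.
  apply: contrapT => h; apply: (unb set0 compact0) => g Gg; apply: h; by exists g.
have hK : forall i, Kin Kn i -> compact (K i) /\ exists g, K i g.
  move=> i Ki; have [cK [g Kg]] := hK0 i Ki; split => //; exists g; exact: interior_subset.
split.
- move=> n k eps T _ _ eps0 hT; exact: (part1 mAf Gam0 hK).
- move=> U hU S US; exact: (part2 mAf hK dense hU US).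
Qed.
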